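(* Let $\mathcal{A}'$ be the localization of $\mathcal{A}=W(2n|n)$ at the multiplicative set $D$ generated by $\{H+k : k\in\mathbb{Z}\}$, let $I'=\mathcal{A}'X+\mathcal{A}'E$, and let $M'=\mathcal{A}'/I'$ as a left $\mathcal{A}'$-module. Then $M'$ is locally $\mathfrak{g}_+$-finite, i.e. for every $v\in M'$ the subspace $U(\mathfrak{g}_+)v$ (where $U(\mathfrak{g}_+)$ is the subalgebra of $\mathcal{A}'$ generated by $X$ and $E$) is finite-dimensional.
   Context: Fix $n\ge1$ and an invertible complex matrix $\eta=(\eta^{ij})$ with $\eta^{ij}=\eta^{ji}$ and inverse $(\eta_{ij})$. $W(2n|n)$ is the associative superalgebra generated by even $x^1,\dots,x^n,\partial_1,\dots,\partial_n$ and odd $\gamma^1,\dots,\gamma^n$ with relations $x^ix^j=x^jx^i$, $\partial_i\partial_j=\partial_j\partial_i$, $\partial_ix^j-x^j\partial_i=\delta_i^j$, $\gamma^i$ commuting with all $x^j,\partial_j$, and $\gamma^i\gamma^j+\gamma^j\gamma^i=2\eta^{ij}$. Repeated indices are summed; $x_i=\eta_{ij}x^j$, $\partial^i=\eta^{ij}\partial_j$. Set $X=\frac{\sqrt{-1}}{\sqrt2}\gamma^i\partial_i$, $H=-\frac12(\partial_ix^i+x^i\partial_i)$, $E=-\frac12\partial^i\partial_i=X^2$, and $\mathfrak{g}_+=\mathbb{C}X\oplus\mathbb{C}E$. *)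

(* Defs.v *)
From mathcomp Require Import all_boot all_algebra.
From mathcomp Require Import complex Rstruct.
Set Implicit Arguments. Unset Strict Implicit. Unset Printing Implicit Defensive.
Import GRing.Theory Num.Theory.
Local Open Scope ring_scope.

Definition CC : numClosedFieldType := Rdefinitions.R[i].

Section WeylClifford.
Variable n : nat.
Variable eta : 'M[CC]_n.
Variable A : algType CC.
Variables (x d g : 'I_n -> A).

Definition W_relations : Prop :=
  [/\ forall i j, x i * x j = x j * x i,
      forall i j, d i * d j = d j * d i,
      forall i j, d i * x j - x j * d i = (i == j)%:R,
      forall i j, g i * x j = x j * g i /\ g i * d j = d j * g i
    & forall i j, g i * g j + g j * g i = (2 * eta i j)%:A].

Definition Hop : A := (- 2^-1 : CC) *: \sum_(i < n) (d i * x i + x i * d i).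
Definition Xop : A := ('i / sqrtC 2 : CC) *: \sum_(i < n) g i * d i.
Definition Eop : A :=
  (- 2^-1 : CC) *: \sum_(i < n) (\sum_(j < n) eta i j *: d j) * d i.

Definition D_invertible : Prop :=
  forall k : int, exists y : A,
    y * (Hop + k%:~R) = 1 /\ (Hop + k%:~R) * y = 1.
End WeylClifford.

Definition is_alg_hom (A B : algType CC) (f : A -> B) : Prop :=
  [/\ forall a b, f (a + b) = f a + f b,
      forall a b, f (a * b) = f a * f b,
      forall (c : CC) a, f (c *: a) = c *: f a
    & f 1 = 1].

(* (A, x, d, g) is the localization A' of W(2n|n) at the multiplicative set D
   generated by {H + k : k in Z}: it is given by generators satisfying the
   relations of W(2n|n) in which every H + k is invertible, and it is initial
   (universal) among all such C-algebras. *)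
Definition is_localized_W (n : nat) (eta : 'M[CC]_n) (A : algType CC)
    (x d g : 'I_n -> A) : Prop :=
  [/\ W_relations eta x d g,
      D_invertible x d
    & forall (B : algType CC) (xb db gb : 'I_n -> B),
        W_relations eta xb db gb -> D_invertible xb db ->
        (exists f : A -> B, is_alg_hom f /\
           forall i, [/\ f (x i) = xb i, f (d i) = db i & f (g i) = gb i])
        /\ (forall f1 f2 : A -> B, is_alg_hom f1 -> is_alg_hom f2 ->
              (forall i, [/\ f1 (x i) = f2 (x i), f1 (d i) = f2 (d i)
                           & f1 (g i) = f2 (g i)]) ->
              forall a, f1 a = f2 a)].

Inductive in_subalg2 (A : algType CC) (X E : A) : A -> Prop :=
  | sub_one : in_subalg2 X E 1
  | sub_X : in_subalg2 X E X
  | sub_E : in_subalg2 X E E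
  | sub_add u v : in_subalg2 X E u -> in_subalg2 X E v -> in_subalg2 X E (u + v)
  | sub_scale (c : CC) u : in_subalg2 X E u -> in_subalg2 X E (c *: u)
  | sub_mul u v : in_subalg2 X E u -> in_subalg2 X E v -> in_subalg2 X E (u * v).

Definition in_left_ideal2 (A : algType CC) (X E a : A) : Prop :=
  exists p q : A, a = p * X + q * E.

(* The left A-module M = A / (A X + A E) is locally finite for the subalgebra
   generated by X and E: for every v = a + I' in M, U v is contained in the
   image of a finite-dimensional subspace span(bs) of A, i.e. U v is
   finite-dimensional. *)
Definition locally_finite_quotient (A : algType CC) (X E : A) : Prop :=
  forall a : A, exists bs : seq A,
    forall u, in_subalg2 X E u ->
      exists cs : 'I_(size bs) -> CC,
        in_left_ideal2 X E (u * a - \sum_(j < size bs) cs j *: bs`_j).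

(* Main.v *)
From HB Require Import structures.
Require Import Defs.
From mathcomp Require Import all_boot all_algebra.
From mathcomp Require Import complex Rstruct.
From mathcomp Require Import boolp.
Import GRing.Theory Num.Theory.
Local Open Scope ring_scope.
Set Warnings "-redundant-canonical-projection -projection-no-head-constant -notation-overridden -ambiguous-paths".
Section SubA.
Variables (A : algType CC) (S : subalgClosed A).
Inductive subT := mkS x & x \in S.
Definition vS u := let: mkS x _ := u in x.
HB.instance Definition _ := [isSub for vS].
HB.instance Definition _ := [Choice of subT by <:].
HB.instance Definition _ := [SubChoice_isSubLalgebra of subT by <:].
HB.instance Definition _ := [SubLalgebra_isSubAlgebra of subT by <:].
Lemma vSM (u v : subT) : val (u * v) = val u * val v. Proof. exact: rmorphM. Qed.
Lemma vSZ c (u : subT) : val (c *: u) = c *: val u. Proof. exact: linearZ. Qed.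
Lemma vSD (u v : subT) : val (u + v) = val u + val v. Proof. exact: rmorphD. Qed.
Lemma vS1 : val (1 : subT) = 1. Proof. exact: rmorph1. Qed.
Lemma vSin (u : subT) : val u \in S. Proof. exact: valP. Qed.
Lemma vSint (k : int) : val (k%:~R : subT) = k%:~R. Proof. exact: rmorph_int. Qed.
End SubA.
Arguments mkS {A S}.
Section LF.
Variables (A : algType CC) (X E : A).
Hypothesis hX2 : X * X = E.

Lemma XE : E * X = X * E. Proof. by rewrite -hX2 mulrA. Qed.

Let I := in_left_ideal2 X E.
Lemma I0 : I 0. Proof. by exists 0, 0; rewrite !mul0r addr0. Qed.
Lemma ID u v : I u -> I v -> I (u + v).
Proof.
move=> [p [q ->]] [p' [q' ->]]; exists (p + p'), (q + q').
by rewrite !mulrDl addrACA.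
Qed.
Lemma IZ c u : I u -> I (c *: u).
Proof. by move=> [p [q ->]]; exists (c *: p), (c *: q); rewrite scalerDr !scalerAl. Qed.
Lemma IM r u : I u -> I (r * u).
Proof. by move=> [p [q ->]]; exists (r * p), (r * q); rewrite mulrDr !mulrA. Qed.
Lemma IE p : I (p * E). Proof. by exists 0, p; rewrite mul0r add0r. Qed.

Variable bs : seq A.
Definition inV v := exists cs : 'I_(size bs) -> CC,
   I (v - \sum_(j < size bs) cs j *: bs`_j).

Lemma inV_I v : I v -> inV v.
Proof.
move=> h; exists (fun _ => 0); rewrite big1 ?subr0 // => j _; exact: scale0r.
Qed.
Lemma inV0 : inV 0. Proof. exact/inV_I/I0. Qed.
Lemma inVD u v : inV u -> inV v -> inV (u + v).
Proof.
move=> [c1 h1] [c2 h2]; exists (fun j => c1 j + c2 j).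
have -> : u + v - \sum_(j < size bs) (c1 j + c2 j) *: bs`_j =
  (u - \sum_(j < size bs) c1 j *: bs`_j) + (v - \sum_(j < size bs) c2 j *: bs`_j).
  have -> : \sum_(j < size bs) (c1 j + c2 j) *: bs`_j =
     \sum_(j < size bs) c1 j *: bs`_j + \sum_(j < size bs) c2 j *: bs`_j.
    by rewrite -big_split; apply: eq_bigr => j _; rewrite scalerDl.
  by rewrite opprD addrACA.
exact: ID.
Qed.
Lemma inVZ c v : inV v -> inV (c *: v).
Proof.
move=> [c1 h1]; exists (fun j => c * c1 j).
have -> : c *: v - \sum_(j < size bs) (c * c1 j) *: bs`_j =
  c *: (v - \sum_(j < size bs) c1 j *: bs`_j).
  by rewrite scalerBr scaler_sumr; congr (_ - _); apply: eq_bigr => j _; rewrite scalerA.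
exact: IZ.
Qed.
Lemma inV_sum (m : nat) (F : 'I_m -> A) : (forall j, inV (F j)) -> inV (\sum_(j < m) F j).
Proof. by move=> h; apply: big_ind => //; [exact: inV0 | exact: inVD]. Qed.


Lemma sum_delta_gen m (F : 'I_m -> A) (i0 : 'I_m) :
  \sum_(k < m) ((k == i0)%:R : CC) *: F k = F i0.
Proof.
rewrite (bigD1 i0) //= eqxx scale1r big1 ?addr0 // => k /negbTE ->; exact: scale0r.
Qed.

Lemma inV_mem w : w \in bs -> inV w.
Proof.
move=> wb; have hi : (index w bs < size bs)%N by rewrite index_mem.
exists (fun k => ((k == Ordinal hi)%:R : CC)).
rewrite sum_delta_gen /= nth_index // subrr; exact: I0.
Qed.

Lemma inV_mul r : (forall w, w \in bs -> inV (r * w)) -> forall v, inV v -> inV (r * v).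
Proof.
move=> h v [cs hv].
have -> : r * v = r * (v - \sum_(j < size bs) cs j *: bs`_j)
     + \sum_(j < size bs) cs j *: (r * bs`_j).
  rewrite mulrBr mulr_sumr.
  have -> : \sum_(j < size bs) r * (cs j *: bs`_j) = \sum_(j < size bs) cs j *: (r * bs`_j).
    by apply: eq_bigr => j _; rewrite scalerAr.
  by rewrite subrK.
apply: inVD; first exact/inV_I/IM.
apply: inV_sum => j; apply: inVZ; apply: h; apply: mem_nth; exact: ltn_ord.
Qed.

Lemma inV_subalg : (forall w, w \in bs -> inV (E * w) /\ inV (X * w)) ->
  forall u, in_subalg2 X E u -> forall v, inV v -> inV (u * v).
Proof.
move=> h u; elim => {u}.
- by move=> v; rewrite mul1r.
- by apply: inV_mul => w /h [].
- by apply: inV_mul => w /h [].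
- by move=> u1 u2 _ h1 _ h2 v hv; rewrite mulrDl; apply: inVD; [exact: h1|exact: h2].
- by move=> c u1 _ h1 v hv; rewrite -scalerAl; apply: inVZ; exact: h1.
- by move=> u1 u2 _ h1 _ h2 v hv; rewrite -mulrA; apply: h1; exact: h2.
Qed.
End LF.
Arguments inV {A} X E bs v.

Section LF2.
Variables (A : algType CC) (X E : A).
Hypothesis hX2 : X * X = E.
Variables (a p : A) (N : nat).
Hypothesis hN : E ^+ N.+1 * a = p * E.

Definition bsF := [seq E ^+ j * a | j <- iota 0 N.+1] ++ [seq X * (E ^+ j * a) | j <- iota 0 N.+1].

Lemma inV_Ea j : inV X E bsF (E ^+ j * a) /\ inV X E bsF (X * (E ^+ j * a)).
Proof.
case: (ltnP j N.+1) => hj.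
  split; apply: inV_mem; rewrite mem_cat; apply/orP; [left|right];
    apply/mapP; exists j => //; rewrite mem_iota.
  - by rewrite add0n hj.
  - by rewrite add0n hj.
have -> : E ^+ j * a = (E ^+ (j - N.+1) * p) * E.
  by rewrite -mulrA -hN mulrA -exprD subnK.
split; apply: inV_I; [exact: IE| rewrite mulrA; exact: IE].
Qed.

Lemma bsF_closed w : w \in bsF -> inV X E bsF (E * w) /\ inV X E bsF (X * w).
Proof.
rewrite mem_cat => /orP [] /mapP [j _ ->].
- split; last by case: (inV_Ea j).
  by rewrite mulrA -exprS; case: (inV_Ea j.+1).
- split.
    rewrite mulrA (XE _ _ _ hX2).
by rewrite -mulrA [E * _]mulrA -exprS; case: (inV_Ea j.+1).
  by rewrite mulrA hX2 mulrA -exprS; case: (inV_Ea j.+1).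
Qed.

Lemma lf_a : exists bs : seq A,
    forall u, in_subalg2 X E u ->
      exists cs : 'I_(size bs) -> CC,
        in_left_ideal2 X E (u * a - \sum_(j < size bs) cs j *: bs`_j).
Proof.
exists bsF => u hu.
have := @inV_subalg A X E bsF bsF_closed u hu.
have ha : inV X E bsF a by case: (inV_Ea 0); rewrite expr0 mul1r.
by move/(_ _ ha).
Qed.
End LF2.


Section Good.
Variables (A : algType CC) (E : A).
Definition goodP (a : A) := forall m, exists N, exists p, E ^+ N * a = p * E ^+ m.

Lemma good0 : goodP 0. Proof. by move=> m; exists 0%N, 0; rewrite mulr0 mul0r. Qed.
Lemma good1 : goodP 1. Proof. by move=> m; exists m, 1; rewrite mulr1 mul1r. Qed.
Lemma goodD a b : goodP a -> goodP b -> goodP (a + b).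
Proof.
move=> ha hb m; have [N1 [p1 h1]] := ha m; have [N2 [p2 h2]] := hb m.
exists (N1 + N2)%N, (E ^+ N2 * p1 + E ^+ N1 * p2).
rewrite mulrDr mulrDl; congr (_ + _).
  by rewrite addnC exprD -mulrA h1 mulrA.
by rewrite exprD -mulrA h2 mulrA.
Qed.
Lemma goodZ c a : goodP a -> goodP (c *: a).
Proof.
move=> ha m; have [N [p h]] := ha m; exists N, (c *: p).
by rewrite -scalerAr h scalerAl.
Qed.
Lemma goodM a b : goodP a -> goodP b -> goodP (a * b).
Proof.
move=> ha hb m; have [N2 [p2 h2]] := hb m; have [N1 [p1 h1]] := ha N2.
exists N1, (p1 * p2); by rewrite mulrA h1 -mulrA h2 mulrA.
Qed.
Lemma good_comm z : E * z = z * E -> goodP z.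
Proof.
move=> h m; exists m, z; have hc : GRing.comm z E by [].
by rewrite (commrX m hc).
Qed.

Lemma powx (z c : A) : E * z = z * E - c -> E * c = c * E ->
  forall m, E ^+ m.+1 * z = (z * E - c *+ m.+1) * E ^+ m.
Proof.
move=> hz hc; elim=> [|m IH]; first by rewrite expr1 expr0 mulr1 mulr1n.
rewrite exprS -mulrA IH mulrA mulrBr mulrA hz mulrnAr hc.
rewrite [E ^+ m.+1]exprS mulrA; congr (_ * _).
by rewrite !mulrBl mulrnAl -addrA -opprD -mulrS.
Qed.

Lemma good_x (z c : A) : E * z = z * E - c -> E * c = c * E -> goodP z.
Proof.
move=> hz hc m; exists m.+1, (z * E - c *+ m.+1); exact: powx.
Qed.

Variable H : A.
Hypothesis hinv : forall k : int, exists y : A,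
    y * (H + k%:~R) = 1 /\ (H + k%:~R) * y = 1.
Hypothesis hEH : forall k : int, E * (H + k%:~R) = (H + (k - 2)%:~R) * E.

Lemma good_inv_aux m : forall (k : int) y, (H + k%:~R) * y = 1 ->
  exists p, E ^+ m * y = p * E ^+ m.
Proof.
elim: m => [|m IH] k y hy; first by exists y; rewrite expr0 mul1r mulr1.
have [z [hz1 hz2]] := hinv (k - 2).
have Ey : E * y = z * E.
  by rewrite -[z * E]mulr1 -hy !mulrA -[z * E * _]mulrA hEH mulrA hz1 mul1r.
have [p hp] := IH _ _ hz2.
by exists p; rewrite exprSr -mulrA Ey mulrA hp -mulrA -exprSr.
Qed.

Lemma good_inv k y : (H + k%:~R) * y = 1 -> goodP y.
Proof. move=> hy m; have [p hp] := good_inv_aux m _ _ hy; by exists m, p. Qed.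
End Good.

Section Comp.
Variables (n : nat) (eta : 'M[CC]_n) (A : algType CC) (x d g : 'I_n -> A).
Hypothesis hW : W_relations eta x d g.
Hypothesis hsym : forall i j, eta i j = eta j i.

Definition Dv i := \sum_(k < n) eta i k *: d k.

Lemma dd i j : d i * d j = d j * d i. Proof. by case: hW. Qed.
Lemma dx i j : d i * x j = x j * d i + (i == j)%:R.
Proof. by case: hW => _ _ h _ _; rewrite -(h i j) addrC subrK. Qed.
Lemma gd i j : g i * d j = d j * g i. Proof. by case: hW => _ _ _ h _; case: (h i j). Qed.

Lemma Dd i j : Dv i * d j = d j * Dv i.
Proof.
rewrite /Dv mulr_suml mulr_sumr; apply: eq_bigr => k _.
by rewrite -scalerAl -scalerAr dd.
Qed.

Lemma delta_sum (c : 'I_n -> CC) j : \sum_(k < n) c k *: ((k == j)%:R : A) = (c j)%:A.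
Proof.
rewrite (bigD1 j) //= eqxx big1 ?addr0 // => k /negbTE ->; exact: scaler0.
Qed.

Lemma Dx i j : Dv i * x j = x j * Dv i + (eta i j)%:A.
Proof.
rewrite /Dv mulr_suml mulr_sumr -(delta_sum (eta i)) -big_split /=.
by apply: eq_bigr => k _; rewrite -scalerAl dx scalerDr scalerAr.
Qed.

Definition Ev := (- 2^-1 : CC) *: \sum_(i < n) Dv i * d i.
Lemma EvE : Eop eta d = Ev. Proof. by []. Qed.

Lemma two_neq0 : (2 : CC) != 0. Proof. by rewrite pnatr_eq0. Qed.
Lemma half2 (B : lmodType CC) (v : B) : (- 2^-1 : CC) *: (v + v) = - v.
Proof. by rewrite -{1 2}[v]scale1r -scalerDl scalerA mulNr mulVf ?two_neq0 // scaleN1r. Qed.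

Lemma sum_delta (F : 'I_n -> A) j : \sum_(i < n) ((i == j)%:R : CC) *: F i = F j.
Proof.
rewrite (bigD1 j) //= eqxx scale1r big1 ?addr0 // => k /negbTE ->; exact: scale0r.
Qed.

Lemma Ex_term i j : Dv i * d i * x j =
  x j * (Dv i * d i) + eta j i *: d i + ((i == j)%:R : CC) *: Dv i.
Proof.
rewrite -mulrA dx mulrDr mulrA Dx mulrDl -scalerAl mul1r hsym mulr_natr -scaler_nat.
by rewrite !mulrA.
Qed.

Lemma Ex j : Ev * x j = x j * Ev - Dv j.
Proof.
rewrite /Ev -scalerAl -scalerAr mulr_suml mulr_sumr.
under eq_bigr do rewrite Ex_term.
rewrite !big_split /= sum_delta.
have -> : \sum_(i < n) eta j i *: d i = Dv j by [].
rewrite -addrA scalerDr; congr (_ + _).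
exact: half2.
Qed.

Lemma gd' i j : d j * g i = g i * d j. Proof. by rewrite gd. Qed.

Lemma Ed j : Ev * d j = d j * Ev.
Proof.
rewrite /Ev -scalerAl -scalerAr mulr_suml mulr_sumr.
by under eq_bigr => i _ do rewrite -mulrA dd mulrA Dd -mulrA.
Qed.

Lemma Dg i j : Dv i * g j = g j * Dv i.
Proof.
rewrite /Dv mulr_suml mulr_sumr; apply: eq_bigr => k _.
by rewrite -scalerAl -scalerAr gd'.
Qed.

Lemma Eg j : Ev * g j = g j * Ev.
Proof.
rewrite /Ev -scalerAl -scalerAr mulr_suml mulr_sumr.
by under eq_bigr => i _ do rewrite -mulrA gd' mulrA Dg -mulrA.
Qed.

Lemma ED j : Ev * Dv j = Dv j * Ev.
Proof.
rewrite /Dv mulr_suml mulr_sumr; apply: eq_bigr => k _.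
by rewrite -scalerAr Ed scalerAl.
Qed.

Lemma EH_term i : Ev * (d i * x i + x i * d i) =
   (d i * x i + x i * d i) * Ev - (Dv i * d i + Dv i * d i).
Proof.
rewrite mulrDr mulrDl [Ev * (d i * x i)]mulrA Ed -[d i * Ev * x i]mulrA Ex mulrBr [Ev * (x i * d i)]mulrA Ex mulrBl -[x i * Ev * d i]mulrA Ed !mulrA Dd.
by rewrite opprD addrACA.
Qed.

Lemma EH : Ev * Hop x d = Hop x d * Ev - (Ev + Ev).
Proof.
have -> : Ev + Ev = (- 2^-1 : CC) *: \sum_(i < n) (Dv i * d i + Dv i * d i).
  by rewrite big_split scalerDr.
rewrite /Hop -[Ev * _]scalerAr -[_ * Ev]scalerAl -scalerBr mulr_suml mulr_sumr -sumrB.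
by under eq_bigr => i _ do rewrite EH_term.
Qed.

Lemma EHk (k : int) : Ev * (Hop x d + k%:~R) = (Hop x d + (k - 2)%:~R) * Ev.
Proof.
rewrite mulrDr mulrDl EH intrB mulrBl mulrzr !mulrzl.
have -> : Ev *~ 2 = Ev + Ev by [].
by rewrite -!addrA; congr (_ + _); rewrite addrC.
Qed.

Lemma double_inj (B : lmodType CC) (u v : B) : u + u = v + v -> u = v.
Proof.
move=> h; have := f_equal (fun w => (- 2^-1 : CC) *: w) h.
by rewrite !half2 => /oppr_inj.
Qed.

Lemma s2 : ('i / sqrtC 2 : CC) * ('i / sqrtC 2) = - 2^-1.
Proof.
rewrite mulrACA -expr2 sqrCi -invfM -expr2 sqrtCK mulN1r //.
Qed.

Lemma X2 : Xop g d * Xop g d = Ev.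
Proof.
have hgg i j : g i * g j + g j * g i = (2 * eta i j)%:A by case: hW.
rewrite /Xop -scalerAl -scalerAr scalerA s2 /Ev; congr (_ *: _).
rewrite mulr_suml.
under eq_bigr do rewrite mulr_sumr.
apply: double_inj.
set T := (X in X + X = _).
have eT : T = \sum_(i < n) \sum_(j < n) g i * g j * (d i * d j).
  apply: eq_bigr => i _; apply: eq_bigr => j _.
  by rewrite -!gd -!mulrA; congr (_ * _); rewrite [LHS]mulrA -gd -mulrA.
have eT' : T = \sum_(i < n) \sum_(j < n) g j * g i * (d i * d j).
  by rewrite eT exchange_big /=; apply: eq_bigr => i _; apply: eq_bigr => j _; rewrite dd.
rewrite {1}eT eT' -big_split /=.
under eq_bigr do rewrite -big_split /=.
rewrite -big_split /=; apply: eq_bigr => i _.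
rewrite /Dv mulr_suml -big_split /=; apply: eq_bigr => j _.
rewrite -mulrDl hgg -scalerAl mul1r -scalerAl dd -scalerDl.
by rewrite mulr_natl mulr2n.
Qed.



Hypothesis hD : D_invertible x d.

Definition goodb : {pred A} := fun a => `[< goodP A Ev a >].

Lemma goodbP a : reflect (goodP A Ev a) (a \in goodb).
Proof. rewrite unfold_in; exact: asboolP. Qed.

Lemma goodb_closed : GRing.subsemialg_closed goodb.
Proof.
split.
- by apply/goodbP; exact: good1.
- split; first by apply/goodbP; exact: good0.
  by move=> u v /goodbP hu /goodbP hv; apply/goodbP; exact: goodD.
- by move=> c u /goodbP hu; apply/goodbP; exact: goodZ.
- by move=> u v /goodbP hu /goodbP hv; apply/goodbP; exact: goodM.
Qed.

HB.instance Definition _ := GRing.isSubalgClosed.Build CC A goodb goodb_closed.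

Lemma xgood i : x i \in goodb.
Proof. apply/goodbP; apply: (@good_x _ _ _ (Dv i)); [exact: Ex | exact: ED]. Qed.
Lemma dgood i : d i \in goodb.
Proof. apply/goodbP; apply: good_comm; exact: Ed. Qed.
Lemma ggood i : g i \in goodb.
Proof. apply/goodbP; apply: good_comm; exact: Eg. Qed.

Definition SA := subT A goodb.
Definition xs i : SA := mkS (x i) (xgood i).
Definition ds i : SA := mkS (d i) (dgood i).
Definition gs i : SA := mkS (g i) (ggood i).

Lemma valHop (xx dd : 'I_n -> SA) : val (Hop xx dd) = Hop (fun i => val (xx i)) (fun i => val (dd i)).
Proof.
rewrite /Hop linearZ rmorph_sum. by under eq_bigr do rewrite rmorphD !rmorphM.
Qed.

Lemma Wsub : W_relations eta xs ds gs.
Proof.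
case: hW => h1 h2 h3 h4 h5; split => i j.
- by apply: val_inj; rewrite !rmorphM /=; exact: h1.
- by apply: val_inj; rewrite !rmorphM /=; exact: h2.
- by apply: val_inj; rewrite rmorphB !rmorphM rmorph_nat /=; exact: h3.
- by case: (h4 i j) => e1 e2; split; apply: val_inj; rewrite !rmorphM /=.
- by apply: val_inj; rewrite rmorphD !rmorphM linearZ rmorph1 /=; exact: h5.
Qed.

Lemma Dsub : D_invertible xs ds.
Proof.
move=> k; have [y [hy1 hy2]] := hD k.
have yg : y \in goodb.
  apply/goodbP; exact: (@good_inv A Ev (Hop x d) hD EHk k y hy2).
exists (mkS y yg); split; apply: val_inj;
  by rewrite !(vSM, vSD) valHop vSint vS1.
Qed.

Hypothesis hU : forall (B : algType CC) (xb db gb : 'I_n -> B),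
        W_relations eta xb db gb -> D_invertible xb db ->
        (exists f : A -> B, is_alg_hom f /\
           forall i, [/\ f (x i) = xb i, f (d i) = db i & f (g i) = gb i])
        /\ (forall f1 f2 : A -> B, is_alg_hom f1 -> is_alg_hom f2 ->
              (forall i, [/\ f1 (x i) = f2 (x i), f1 (d i) = f2 (d i)
                           & f1 (g i) = f2 (g i)]) ->
              forall a, f1 a = f2 a).

Lemma all_good a : goodP A Ev a.
Proof.
have [[f [hf hfg]] _] := hU _ _ _ _ Wsub Dsub.
have [_ huniq] := hU _ _ _ _ hW hD.
have hid : is_alg_hom (fun u : A => u) by [].
have hvf : is_alg_hom (fun u => val (f u)).
  case: hf => f1 f2 f3 f4; split => [u v|u v|c u|].
  - by rewrite f1 vSD.
  - by rewrite f2 vSM.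
  - by rewrite f3 vSZ.
  - by rewrite f4 vS1.
have hag : forall i, [/\ x i = val (f (x i)), d i = val (f (d i)) & g i = val (f (g i))].
  by move=> i; case: (hfg i) => e1 e2 e3; rewrite e1 e2 e3.
have e := huniq _ _ hid hvf hag a.
apply/goodbP; rewrite e; exact: valP.
Qed.

End Comp.

Theorem proposition3p4 (n : nat) (eta : 'M[CC]_n) (A' : algType CC)
    (x d g : 'I_n -> A') :
  (1 <= n)%N ->
  eta^T = eta ->
  eta \in unitmx ->
  is_localized_W eta x d g ->
  locally_finite_quotient (Xop g d) (Eop eta d).
Proof.
move=> _ hT _ [hW hD hU].
have hs : forall i j, eta i j = eta j i by move=> i j; rewrite -{1}hT mxE.
have hX2 : Xop g d * Xop g d = Eop eta d by exact: (@X2 n eta A' x d g hW).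
move=> a.
have [N [p hp]] := @all_good n eta A' x d g hW hs hD hU a 1.
apply: (@lf_a A' (Xop g d) (Eop eta d) hX2 a (Eop eta d * p) N).
by rewrite exprS -mulrA hp expr1 mulrA.
Qed.
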